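(* Let $\mathcal C=\mathcal C(I,A,(\rho_i)_{i\in I},(C^a)_{a\in A})$ be a connected Cartan scheme and $\mathcal R=\mathcal R(\mathcal C,(R^a)_{a\in A})$ a root system of type $\mathcal C$. For $a\in A$ let $(R^a)^{\mathrm{re}}=\{\omega(\alpha_i)\mid\omega\in\mathrm{Hom}(b,a),\ b\in A,\ i\in I\}$. The following are equivalent: (1) $R^a$ is finite for all $a\in A$; (2) $R^a$ is finite for at least one $a\in A$; (3) $(R^a)^{\mathrm{re}}$ is finite for all $a\in A$; (4) the Weyl groupoid $\mathcal W(\mathcal C)$ is finite (has finitely many morphisms).
   Context: Let $I$ be a nonempty finite set and $\{\alpha_i\mid i\in I\}$ the standard basis of $\mathbb Z^I$; $\mathbb N_0=\{0,1,2,\dots\}$. A generalized Cartan matrix is $C=(c_{ij})_{i,j\in I}\in\mathbb Z^{I\times I}$ with $c_{ii}=2$, $c_{jk}\le0$ for $j\ne k$, and $c_{ij}=0\Rightarrow c_{ji}=0$. A Cartan scheme $\mathcal C=\mathcal C(I,A,(\rho_i)_{i\in I},(C^a)_{a\in A})$ consists of a nonempty set $A$, maps $\rho_i:A\to A$ and generalized Cartan matrices $C^a=(c^a_{jk})_{j,k\in I}$ such that (C1) $\rho_i^2=\mathrm{id}$ and (C2) $c^a_{ij}=c^{\rho_i(a)}_{ij}$ for all $a\in A$, $i,j\in I$. It is connected if the group generated by the $\rho_i$ acts transitively on $A$. For $i\in I$, $a\in A$ let $\sigma_i^a\in\mathrm{Aut}(\mathbb Z^I)$, $\sigma_i^a(\alpha_j)=\alpha_j-c^a_{ij}\alpha_i$.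 The Weyl groupoid $\mathcal W(\mathcal C)$ has object set $A$; $\mathrm{Hom}(a,b)$ consists of the triples $(b,f,a)$ with $f=\sigma_{i_n}^{a_{n-1}}\cdots\sigma_{i_1}^{a_0}$, where $n\ge0$, $i_1,\dots,i_n\in I$, $a_0=a$, $a_k=\rho_{i_k}(a_{k-1})$, $a_n=b$ (one writes $\omega(v)=f(v)$ for $\omega=(b,f,a)$); composition is multiplication in $\mathrm{Aut}(\mathbb Z^I)$. A root system of type $\mathcal C$ is a family $\mathcal R=\mathcal R(\mathcal C,(R^a)_{a\in A})$ of subsets $R^a\subset\mathbb Z^I$ such that, writing $R^a_+=R^a\cap\mathbb N_0^I$ and $m^a_{i,j}=|R^a\cap(\mathbb N_0\alpha_i+\mathbb N_0\alpha_j)|$, for all $a\in A$, $i,j\in I$: (R1) $R^a=R^a_+\cup(-R^a_+)$; (R2) $R^a\cap\mathbb Z\alpha_i=\{\alpha_i,-\alpha_i\}$; (R3) $\sigma_i^a(R^a)=R^{\rho_i(a)}$; (R4) if $i\neq j$ and $m^a_{i,j}$ is finite then $(\rho_i\rho_j)^{m^a_{i,j}}(a)=a$. *)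

(* Defs.v *)
From Stdlib Require Import List.
From HB Require Import structures.
From mathcomp Require Import all_boot all_order all_algebra.
Set Implicit Arguments. Unset Strict Implicit. Unset Printing Implicit Defensive.
Import Order.TTheory GRing.Theory Num.Theory.
Local Open Scope ring_scope.

Section CartanDefs.
Variable I : finType.

Definition vec := {ffun I -> int}.

Definition alpha (i : I) : vec := [ffun j => ((i == j) : nat)%:Z].

Definition gcm (c : I -> I -> int) : Prop :=
  [/\ forall i, c i i = 2,
      forall j k, j != k -> c j k <= 0
    & forall i j, c i j = 0 -> c j i = 0].

Variable A : Type.
Variable rho : I -> A -> A.
Variable C : A -> I -> I -> int.

Definition cartan_scheme : Prop :=
  [/\ forall a, gcm (C a),
      forall i a, rho i (rho i a) = a
    & forall a i j, C (rho i a) i j = C a i j].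

Definition walk (a : A) (w : seq I) : A := foldl (fun b i => rho i b) a w.

Definition connected : Prop := forall a b, exists w, walk a w = b.

Definition sigma (a : A) (i : I) (v : vec) : vec :=
  v - alpha i *~ (\sum_(j : I) C a i j * v j).

(* For a word w = [:: i_1; ...; i_n] starting at a: (a_n, sigma_{i_n}^{a_{n-1}} o ... o sigma_{i_1}^{a_0}) *)
Fixpoint wmap (a : A) (w : seq I) : A * (vec -> vec) :=
  match w with
  | [::] => (a, id)
  | i :: w' => let p := wmap (rho i a) w' in (p.1, p.2 \o sigma a i)
  end.

(* morphisms of the Weyl groupoid: triples (b, f, a) in Hom(a, b) *)
Definition weyl_mor (t : A * (vec -> vec) * A) : Prop :=
  exists w, wmap t.2 w = (t.1.1, t.1.2).

Definition finite_pred {T : Type} (P : T -> Prop) : Prop :=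
  exists s : list T, forall x, P x -> In x s.

Definition nonneg (v : vec) : Prop := forall j, 0 <= v j.

Definition card_is (P : vec -> Prop) (m : nat) : Prop :=
  exists s : seq vec, [/\ uniq s, size s = m & forall v, v \in s <-> P v].

Variable R : A -> vec -> Prop.

Definition Rpos (a : A) (v : vec) : Prop := R a v /\ nonneg v.

Definition root_system : Prop :=
  [/\ (forall a v, R a v <-> Rpos a v \/ Rpos a (- v)),
      (forall a i v, (R a v /\ exists k : int, v = alpha i *~ k) <->
                     (v = alpha i \/ v = - alpha i)),
      (forall a i v, R (rho i a) v <-> exists u, R a u /\ v = sigma a i u)
    & (forall a i j, i != j -> forall m : nat,
         card_is (fun v => R a v /\ exists p q : nat,
                                       v = alpha i *+ p + alpha j *+ q) m ->
         iter m (fun b => rho i (rho j b)) a = a)].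

Definition Rre (a : A) (v : vec) : Prop :=
  exists b w i, (wmap b w).1 = a /\ v = (wmap b w).2 (alpha i).

End CartanDefs.

(* Main.v *)
Require Import Defs.
From mathcomp Require Import all_boot all_order all_algebra.
From mathcomp Require Import zify ring.
From Stdlib Require Import Classical ClassicalEpsilon FunctionalExtensionality.
Set Implicit Arguments. Unset Strict Implicit. Unset Printing Implicit Defensive.
Import Order.TTheory GRing.Theory Num.Theory.
Local Open Scope ring_scope.
Lemma sum0 (x y : int) : 0 <= x -> 0 <= y -> x + y = 0 -> x = 0 /\ y = 0.
Proof. lia. Qed.
Lemma prod1 (x y : int) : 0 <= x -> 0 <= y -> x * y = 1 -> x = 1 /\ y = 1.
Proof.
case: x => [n|n] // _; case: y => [m|m] // _.
rewrite -PoszM => -[] /eqP; rewrite muln_eq1 => /andP[/eqP -> /eqP ->]; by [].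
Qed.
Lemma mat2 (a b c d a' b' c' d' : int) : 0 <= a -> 0 <= b -> 0 <= c -> 0 <= d -> 0 <= a' -> 0 <= b' -> 0 <= c' -> 0 <= d' ->
 a * a' + b * c' = 1 -> a * b' + b * d' = 0 -> c * a' + d * c' = 0 -> c * b' + d * d' = 1 -> a * d - b * c = 1 ->
 [/\ a = 1, b = 0, c = 0 & d = 1].
Proof.
move=> ha hb hc hd ha' hb' hc' hd' e1 e2 e3 e4 e5.
have [p1 p2] := sum0 (mulr_ge0 ha hb') (mulr_ge0 hb hd') e2.
have [p3 p4] := sum0 (mulr_ge0 hc ha') (mulr_ge0 hd hc') e3.
have hbc := mulr_ge0 hb hc.
have an : a != 0.
  by apply/eqP => a0; move: e5; rewrite a0 mul0r; lia.
have dn : d != 0.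
  by apply/eqP => d0; move: e5; rewrite d0 mulr0; lia.
have b'0 : b' = 0 by move/eqP: p1; rewrite mulf_eq0 (negbTE an) => /eqP.
have c'0 : c' = 0 by move/eqP: p4; rewrite mulf_eq0 (negbTE dn) => /eqP.
move: e1 e4; rewrite b'0 c'0 mulr0 addr0 mulr0 add0r => e1 e4.
have [a1 a'1] := prod1 ha ha' e1.
have [d1 d'1] := prod1 hd hd' e4.
move: p2 p3; rewrite d'1 a'1 !mulr1 => -> ->; by [].
Qed.
Lemma mat2' (a b c d a' b' c' d' : int) : 0 <= a -> 0 <= b -> 0 <= c -> 0 <= d -> 0 <= a' -> 0 <= b' -> 0 <= c' -> 0 <= d' ->
 a' * a + c' * b = 1 -> b' * a + d' * b = 0 -> a' * c + c' * d = 0 -> b' * c + d' * d = 1 -> a * d - b * c = 1 ->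
 [/\ a = 1, b = 0, c = 0 & d = 1].
Proof.
move=> ha hb hc hd ha' hb' hc' hd' e1 e2 e3 e4 e5; apply: (@mat2 a b c d a' b' c' d') => //.
- by rewrite -e1; ring.
- by rewrite -e2; ring.
- by rewrite -e3; ring.
- by rewrite -e4; ring.
Qed.
Lemma fD (I : finType) (u v : vec I) j : (u + v) j = u j + v j.
Proof. by rewrite /= ffunE. Qed.
Lemma fN (I : finType) (v : vec I) j : (- v) j = - v j.
Proof. by rewrite /= ffunE. Qed.
Lemma f0 (I : finType) j : (0 : vec I) j = 0.
Proof. by rewrite /= ffunE. Qed.
Lemma fB (I : finType) (u v : vec I) j : (u - v) j = u j - v j.
Proof. by rewrite fD fN. Qed.
Lemma fMz (I : finType) (v : vec I) k j : (v *~ k) j = v j * k.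
Proof. by rewrite ffunMzE mulrzz. Qed.

Section Basics.
Variable I : finType.
Variable A : Type.
Variable rho : I -> A -> A.
Variable C : A -> I -> I -> int.
Variable R : A -> vec I -> Prop.
Hypothesis HC : cartan_scheme rho C.
Hypothesis HR : root_system rho C R.

Local Notation vec := (vec I).
Local Notation walk := (walk rho).
Local Notation sg := (sigma C).
Definition mp x w : vec -> vec := (wmap rho C x w).2.

Lemma walk_cons x i w : walk x (i :: w) = walk (rho i x) w.
Proof. by []. Qed.
Lemma walk_cat x w1 w2 : walk x (w1 ++ w2) = walk (walk x w1) w2.
Proof. by rewrite /walk foldl_cat. Qed.
Lemma wmap1 x w : (wmap rho C x w).1 = walk x w.
Proof. by elim: w x => [//|i w IH] x /=; rewrite IH. Qed.
Lemma mp_nil x v : mp x [::] v = v. Proof. by []. Qed.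
Lemma mp_cons x i w v : mp x (i :: w) v = mp (rho i x) w (sg x i v).
Proof. by []. Qed.
Lemma mp_cat x w1 w2 v : mp x (w1 ++ w2) v = mp (walk x w1) w2 (mp x w1 v).
Proof. by elim: w1 x v => [//|i w IH] x v /=; rewrite mp_cons IH. Qed.

Lemma alphaE (i k : I) : alpha i k = ((i == k) : nat)%:Z.
Proof. by rewrite ffunE. Qed.

Definition lf x i (v : vec) := \sum_(j : I) C x i j * v j.

Lemma lfD x i u v : lf x i (u + v) = lf x i u + lf x i v.
Proof. by rewrite /lf -big_split /=; apply: eq_bigr => j _; rewrite fD mulrDr. Qed.
Lemma lfN x i v : lf x i (- v) = - lf x i v.
Proof. by rewrite /lf -sumrN; apply: eq_bigr => j _; rewrite fN mulrN. Qed.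
Lemma lfMz x i v k : lf x i (v *~ k) = lf x i v * k.
Proof.
rewrite /lf big_distrl /=; apply: eq_bigr => j _.
by rewrite fMz mulrA.
Qed.
Lemma lf_alpha x i k : lf x i (alpha k) = C x i k.
Proof.
rewrite /lf (bigD1 k) //= alphaE eqxx mulr1 big1 ?addr0 // => j /negPf jk.
by rewrite alphaE eq_sym jk mulr0.
Qed.

Lemma sgE x i v : sg x i v = v - alpha i *~ lf x i v.
Proof. by []. Qed.

Lemma sgD x i u v : sg x i (u + v) = sg x i u + sg x i v.
Proof. by rewrite !sgE lfD mulrzDr opprD addrACA. Qed.
Lemma sgN x i v : sg x i (- v) = - sg x i v.
Proof. by rewrite !sgE lfN mulrNz opprK opprB addrC. Qed.
Lemma sgMz x i v k : sg x i (v *~ k) = sg x i v *~ k.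
Proof. by rewrite !sgE lfMz mulrzBl mulrzA. Qed.
Lemma sg0 x i : sg x i 0 = 0.
Proof. by rewrite sgE /lf big1 ?mulr0z ?subr0 // => j _; rewrite f0 mulr0. Qed.

Lemma C_rho x i j : C (rho i x) i j = C x i j.
Proof. by case: HC => _ _ ->. Qed.
Lemma C_ii x i : C x i i = 2.
Proof. by case: HC => H _ _; case: (H x) => ->. Qed.
Lemma rho2 x i : rho i (rho i x) = x.
Proof. by case: HC => _ ->. Qed.

Lemma lf_rho x i v : lf (rho i x) i v = lf x i v.
Proof. by apply: eq_bigr => j _; rewrite C_rho. Qed.

Lemma sg_alpha x i : sg x i (alpha i) = - alpha i.
Proof.
rewrite sgE lf_alpha C_ii; change (alpha i *~ 2) with (alpha i *+ 2).
by rewrite mulr2n opprD addrA subrr add0r.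
Qed.

Lemma sgK x i v : sg (rho i x) i (sg x i v) = v.
Proof.
rewrite [sg (rho i x) i _]sgE lf_rho {2}sgE lfD lfN lfMz lf_alpha C_ii sgE.
apply/ffunP => k; rewrite !fB !fMz; move: (v k) (lf x i v) (alpha i k) => c s a; ring.
Qed.

Lemma sgK' x i v : sg x i (sg (rho i x) i v) = v.
Proof. by rewrite -{1}(rho2 x i) sgK. Qed.

Lemma mp0 x w : mp x w 0 = 0.
Proof. by elim: w x => [//|i w IH] x; rewrite mp_cons sg0 IH. Qed.
Lemma mpD x w u v : mp x w (u + v) = mp x w u + mp x w v.
Proof. by elim: w x u v => [//|i w IH] x u v; rewrite !mp_cons sgD IH. Qed.
Lemma mpN x w v : mp x w (- v) = - mp x w v.
Proof. by elim: w x v => [//|i w IH] x v; rewrite !mp_cons sgN IH. Qed.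
Lemma mpMz x w v k : mp x w (v *~ k) = mp x w v *~ k.
Proof. by elim: w x v => [//|i w IH] x v; rewrite !mp_cons sgMz IH. Qed.
Lemma mpMn x w v (k : nat) : mp x w (v *+ k) = mp x w v *+ k.
Proof. by elim: k => [|k IH]; rewrite ?mulr0n ?mp0 // !mulrS mpD IH. Qed.
Lemma mpB x w u v : mp x w (u - v) = mp x w u - mp x w v.
Proof. by rewrite mpD mpN. Qed.

Lemma walk_rev x w : walk (walk x w) (rev w) = x.
Proof.
elim: w x => [//|i w IH] x.
by rewrite rev_cons -cats1 walk_cat walk_cons IH /= rho2.
Qed.

Lemma mp_rev x w v : mp (walk x w) (rev w) (mp x w v) = v.
Proof.
elim: w x v => [//|i w IH] x v.
rewrite rev_cons -cats1 mp_cat walk_cons mp_cons IH walk_rev.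
rewrite ?mp_cons; exact: sgK.
Qed.

Lemma mp_rev' x w v : mp x w (mp (walk x w) (rev w) v) = v.
Proof.
elim: w x v => [//|i w IH] x v.
rewrite rev_cons -cats1 mp_cat walk_cons mp_cons.
rewrite walk_rev.
rewrite ?mp_cons; rewrite [mp _ [::] _]/= sgK' IH //.
Qed.

Lemma mp_inj x w u v : mp x w u = mp x w v -> u = v.
Proof. by move=> h; rewrite -(mp_rev x w u) h mp_rev. Qed.

Definition eqw x w1 w2 := walk x w1 = walk x w2 /\ forall v, mp x w1 v = mp x w2 v.

Lemma eqw_refl x w : eqw x w w. Proof. by []. Qed.
Lemma eqw_sym x w1 w2 : eqw x w1 w2 -> eqw x w2 w1.
Proof. by case=> h1 h2; split=> // v; rewrite h2. Qed.
Lemma eqw_trans x w1 w2 w3 : eqw x w1 w2 -> eqw x w2 w3 -> eqw x w1 w3.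
Proof. by case=> h1 h2 [h3 h4]; split; [rewrite h1| move=> v; rewrite h2]. Qed.
Lemma eqw_cons x i w1 w2 : eqw (rho i x) w1 w2 -> eqw x (i :: w1) (i :: w2).
Proof. by case=> h1 h2; split=> // v; rewrite !mp_cons h2. Qed.
Lemma eqw_catr x w1 w2 p : eqw x w1 w2 -> eqw x (w1 ++ p) (w2 ++ p).
Proof.
case=> h1 h2; split; first by rewrite !walk_cat h1.
by move=> v; rewrite !mp_cat h1 h2.
Qed.
Lemma eqw_catl x q w1 w2 : eqw (walk x q) w1 w2 -> eqw x (q ++ w1) (q ++ w2).
Proof.
case=> h1 h2; split; first by rewrite !walk_cat h1.
by move=> v; rewrite !mp_cat h2.
Qed.
Lemma eqw_cancel x i w : eqw x (i :: i :: w) w.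
Proof.
split; first by rewrite !walk_cons rho2.
move=> v; rewrite !mp_cons sgK.
by rewrite rho2.
Qed.


Lemma R1' x v : R x v <-> Rpos R x v \/ Rpos R x (- v).
Proof. by case: HR. Qed.
Lemma R_sign x v : R x v -> nonneg v \/ nonneg (- v).
Proof. by move/R1' => [[_ h]|[_ h]]; [left|right]. Qed.
Lemma R_opp x v : R x v -> R x (- v).
Proof.
move/R1' => [h|h]; apply/R1'; [right; by rewrite opprK | left; by []].
Qed.
Lemma R_alpha x i : R x (alpha i).
Proof. by case: HR => _ H2 _ _; case: (proj2 (H2 x i (alpha i)) (or_introl erefl)). Qed.
Lemma R_mult x i v : R x v -> (exists k : int, v = alpha i *~ k) -> v = alpha i \/ v = - alpha i.
Proof. by case: HR => _ H2 _ _ h1 h2; apply/(H2 x i v). Qed.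
Lemma R_sg x i v : R x v -> R (rho i x) (sg x i v).
Proof. by case: HR => _ _ H3 _ h; apply/H3; exists v. Qed.
Lemma R_mp x w v : R x v -> R (walk x w) (mp x w v).
Proof. by elim: w x v => [//|i w IH] x v h; rewrite mp_cons walk_cons; apply/IH/R_sg. Qed.

Definition im x w v := mp (walk x w) (rev w) v.
Lemma R_im x w v : R (walk x w) v -> R x (im x w v).
Proof. by move=> h; have := R_mp (rev w) h; rewrite walk_rev. Qed.
Lemma im_mp x w v : im x w (mp x w v) = v. Proof. exact: mp_rev. Qed.
Lemma mp_im x w v : mp x w (im x w v) = v. Proof. exact: mp_rev'. Qed.
Lemma imD x w u v : im x w (u + v) = im x w u + im x w v. Proof. exact: mpD. Qed.
Lemma imN x w v : im x w (- v) = - im x w v. Proof. exact: mpN. Qed.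
Lemma imMz x w v k : im x w (v *~ k) = im x w v *~ k. Proof. exact: mpMz. Qed.

Lemma alpha_i (i : I) : alpha i i = 1. Proof. by rewrite alphaE eqxx. Qed.
Lemma alpha_ne (i k : I) : i != k -> alpha i k = 0. Proof. by rewrite alphaE => /negPf ->. Qed.

Lemma alpha_nz (i : I) : alpha i != 0.
Proof. by apply/eqP => /ffunP /(_ i); rewrite alpha_i f0. Qed.


Variable i0 : I.
Lemma R_nz x v : R x v -> v != 0.
Proof.
move=> h; apply/eqP => v0.
have := R_mult (i := i0) h; case.
  by exists 0; rewrite v0 mulr0z.
  by move=> e; move: (alpha_nz i0); rewrite -e v0 eqxx.
by move/eqP; rewrite v0 eq_sym oppr_eq0 (negPf (alpha_nz i0)).
Qed.

Lemma nonneg0 (v : vec) : nonneg v -> nonneg (- v) -> v = 0.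
Proof.
move=> h1 h2; apply/ffunP => k; rewrite f0.
by apply/eqP; rewrite eq_le h1 andbT -oppr_ge0 -fN h2.
Qed.

Lemma R_pn x v : R x v -> nonneg v -> nonneg (- v) -> False.
Proof. by move=> h h1 h2; move: (R_nz h); rewrite (nonneg0 h1 h2) eqxx. Qed.

Lemma sg_out x i v k : k != i -> sg x i v k = v k.
Proof. by move=> ki; rewrite sgE fB fMz alpha_ne 1?eq_sym // mul0r subr0. Qed.

Lemma sigma_pos x i v : R x v -> nonneg v -> v != alpha i -> nonneg (sg x i v).
Proof.
move=> hR hn hne.
have [k [ki vk]] : exists k, k != i /\ v k != 0.
  apply: NNPP => hc.
  have hv : v = alpha i *~ v i.
    apply/ffunP => k; rewrite fMz; case: (eqVneq k i) => [->|ki].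
      by rewrite alpha_i mul1r.
    rewrite alpha_ne 1?eq_sym // mul0r; apply: NNPP => h; apply: hc; exists k.
    by split=> //; apply/eqP.
  case: (R_mult hR (ex_intro _ _ hv)) => e; first by rewrite e eqxx in hne.
  by move: (hn i); rewrite e fN alpha_i.
have vk0 : 0 < v k by rewrite lt_def vk hn.
case: (R_sign (R_sg i hR)) => // h; exfalso.
by move: (h k); rewrite fN sg_out // oppr_ge0 leNgt vk0.
Qed.

Fixpoint invl x w : seq vec :=
  if w is i :: w' then alpha i :: map (sg (rho i x) i) (invl (rho i x) w') else [::].

Lemma size_invl x w : size (invl x w) = size w.
Proof. by elim: w x => [//|i w IH] x /=; rewrite size_map IH. Qed.

Lemma inv_in x w b : R x b -> nonneg b -> nonneg (- mp x w b) -> b \in invl x w.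
Proof.
elim: w x b => [|i w IH] x b hR hn hm; first by exfalso; exact: R_pn hR hn hm.
rewrite /= in_cons; case: (eqVneq b (alpha i)) => //= hb.
have h1 := sigma_pos hR hn hb.
have -> : b = sg (rho i x) i (sg x i b) by rewrite sgK.
by apply: map_f; apply: IH => //; apply: R_sg.
Qed.

Lemma im_cons x i w v : im x (i :: w) v = sg (rho i x) i (im (rho i x) w v).
Proof.
rewrite /im rev_cons -cats1 mp_cat walk_cons walk_rev mp_cons; by [].
Qed.

Lemma im_rcons x w c v : im x (w ++ [:: c]) v = im x w (sg (rho c (walk x w)) c v).
Proof.
have e1 : rev [:: c] = [:: c] by [].
rewrite /im rev_cat e1 walk_cat mp_cat.
change (walk (walk x w) [:: c]) with (rho c (walk x w)).
change (walk (rho c (walk x w)) [:: c]) with (rho c (rho c (walk x w))).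
by rewrite rho2.
Qed.

Lemma invl_rcons x w c : invl x (w ++ [:: c]) = invl x w ++ [:: im x w (alpha c)].
Proof.
elim: w x => [|i w IH] x /=; first by [].
by rewrite IH map_cat /= im_cons.
Qed.

Lemma mp_rcons x w c v : mp x (w ++ [:: c]) v = sg (walk x w) c (mp x w v).
Proof. by rewrite mp_cat. Qed.

Lemma N_step x w c b : R x b -> nonneg b -> nonneg (- mp x w b) ->
  nonneg (im x w (alpha c)) -> nonneg (- mp x (w ++ [:: c]) b).
Proof.
move=> hR hn hm hc; rewrite mp_rcons -sgN.
set g := mp x w b.
have hg : R (walk x w) (- g) by apply/R_opp/R_mp.
case: (eqVneq (- g) (alpha c)) => e.
  exfalso; have eb : b = - im x w (alpha c) by rewrite -e imN opprK /g im_mp.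
  by apply: (R_pn hR hn); rewrite eb opprK.
exact: sigma_pos.
Qed.


Definition inspan (i j : I) (v : vec) := forall k, k != i -> k != j -> v k = 0.
Definition Iword (i j : I) (w : seq I) := all (fun c => (c == i) || (c == j)) w.

Lemma inspan_sym i j v : inspan i j v -> inspan j i v.
Proof. by move=> h k h1 h2; apply: h. Qed.

Lemma mp_out x i j w v k : Iword i j w -> k != i -> k != j -> mp x w v k = v k.
Proof.
elim: w x v => [//|c w IH] x v /= /andP[hc hw] ki kj.
rewrite mp_cons IH //; case/orP: hc => /eqP ->; exact: sg_out.
Qed.

Lemma mp_span x i j w v : Iword i j w -> inspan i j v -> inspan i j (mp x w v).
Proof. by move=> hw hv k ki kj; rewrite (mp_out _ _ hw) // hv. Qed.

Lemma Iword_cat i j w1 w2 : Iword i j (w1 ++ w2) = Iword i j w1 && Iword i j w2.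
Proof. by rewrite /Iword all_cat. Qed.
Lemma Iword_rev i j w : Iword i j (rev w) = Iword i j w.
Proof. by rewrite /Iword all_rev. Qed.

Lemma im_span x i j w v : Iword i j w -> inspan i j v -> inspan i j (im x w v).
Proof. by move=> hw hv; apply: mp_span => //; rewrite Iword_rev. Qed.

Lemma alpha_span_i i j : inspan i j (alpha i).
Proof. by move=> k ki _; rewrite alpha_ne // eq_sym. Qed.
Lemma alpha_span_j i j : inspan i j (alpha j).
Proof. by move=> k _ kj; rewrite alpha_ne // eq_sym. Qed.

Lemma span_expand i j v : i != j -> inspan i j v -> v = alpha i *~ v i + alpha j *~ v j.
Proof.
move=> ij hv; apply/ffunP => k; rewrite fD !fMz.
have ji : j != i by rewrite eq_sym.
case: (eqVneq k i) => [->|ki].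
  by rewrite alpha_i (alpha_ne ji) mul1r mul0r addr0.
case: (eqVneq k j) => [->|kj].
  by rewrite alpha_i (alpha_ne ij) mul1r mul0r add0r.
have ik : i != k by rewrite eq_sym.
have jk : j != k by rewrite eq_sym.
by rewrite hv // (alpha_ne ik) (alpha_ne jk) !mul0r addr0.
Qed.

Lemma nonneg_alpha (i : I) : nonneg (alpha i).
Proof. by move=> k; rewrite alphaE. Qed.

Lemma nonneg_comb (u v : vec) a b : nonneg u -> nonneg v -> 0 <= a -> 0 <= b ->
  nonneg (u *~ a + v *~ b).
Proof.
move=> hu hv ha hb k; rewrite fD !fMz.
by apply: addr_ge0; apply: mulr_ge0.
Qed.

Lemma nonneg_opp_comb (u v : vec) a b : nonneg (- u) -> nonneg (- v) -> 0 <= a -> 0 <= b ->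
  nonneg (- (u *~ a + v *~ b)).
Proof.
move=> hu hv ha hb; rewrite opprD -!mulNrz; exact: nonneg_comb.
Qed.

Lemma In_mem (T : eqType) (x : T) (s : seq T) : List.In x s <-> x \in s.
Proof.
elim: s => [//|y s IH] /=; rewrite in_cons; split.
  by case=> [->|/IH ->]; rewrite ?eqxx ?orbT.
by case/orP => [/eqP ->|/IH h]; [left|right].
Qed.

Definition bP (P : Prop) : bool := if excluded_middle_informative P then true else false.
Lemma bPE (P : Prop) : bP P <-> P.
Proof. by rewrite /bP; case: excluded_middle_informative. Qed.

Hypothesis fin : forall a, finite_pred (R a).

Lemma exact_list x (Q : vec -> Prop) : (forall v, Q v -> R x v) ->
  exists s, uniq s /\ forall v, v \in s <-> Q v.
Proof.
move=> hQ; case: (fin x) => l hl.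
exists (undup (filter (fun v => bP (Q v)) l)); split; first exact: undup_uniq.
move=> v; rewrite mem_undup mem_filter; split.
  by case/andP => /bPE.
by move=> h; apply/andP; split; [apply/bPE | apply/In_mem; apply: hl; apply: hQ].
Qed.

Fixpoint alt (s t : I) n : seq I := if n is n'.+1 then s :: alt t s n' else [::].

Lemma size_alt s t n : size (alt s t n) = n.
Proof. by elim: n s t => [//|n IH] s t /=; rewrite IH. Qed.

Lemma alt_rcons s t n : alt s t n.+1 = alt s t n ++ [:: if odd n then t else s].
Proof.
elim: n s t => [//|n IH] s t.
change (alt s t n.+2) with (s :: alt t s n.+1).
rewrite IH; change (alt s t n.+1) with (s :: alt t s n).
by rewrite /= if_neg.
Qed.

Lemma Iword_alt i j n : Iword i j (alt i j n) /\ Iword i j (alt j i n).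
Proof.
elim: n => [//|n [h1 h2]] /=; by rewrite ?h1 ?h2 ?eqxx ?orbT.
Qed.

Lemma rev_alt s t n : rev (alt s t n) = if odd n then alt s t n else alt t s n.
Proof.
elim: n => [//|n IH]; rewrite [in LHS]alt_rcons rev_cat IH /=.
by case: (odd n).
Qed.

Lemma alt_add s t a b :
  alt s t (a + b) = alt s t a ++ (if odd a then alt t s b else alt s t b).
Proof.
elim: a s t => [//|a IH] s t; rewrite addSn /= IH.
by case: (odd a).
Qed.

Definition Pex z i j (s : seq vec) :=
  uniq s /\ forall v, v \in s <-> [/\ R z v, inspan i j v & nonneg v].

Lemma Pex_sym z i j s : Pex z i j s -> Pex z j i s.
Proof.
case=> hu hs; split=> // v; rewrite hs; split; case=> h1 h2 h3; split=> //;
  exact: inspan_sym.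
Qed.

Lemma im_nil x v : im x [::] v = v. Proof. by []. Qed.

Lemma im_last x w c : im x (w ++ [:: c]) (alpha c) = - im x w (alpha c).
Proof. by rewrite im_rcons sg_alpha imN. Qed.

Lemma growth z i j s : i != j -> Pex z i j s -> forall t, (t <= size s)%N ->
  uniq (invl z (alt i j t)) /\ forall b, b \in invl z (alt i j t) ->
   [/\ R z b, inspan i j b, nonneg b & nonneg (- mp z (alt i j t) b)].
Proof.
move=> ij [su hs]; elim=> [_|t IH ht]; first by split.
have [IHu IHb] := IH (ltnW ht).
set w := alt i j t; set c := if odd t then j else i.
have hw : Iword i j w by case: (Iword_alt i j t).
have cij : (c == i) || (c == j) by rewrite /c; case: (odd t); rewrite eqxx ?orbT.
set g := im z w (alpha c).
have hgR : R z g by apply: R_im; apply: R_alpha.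
have hg : nonneg g.
  apply: NNPP => hng.
  have hng' : nonneg (- g) by case: (R_sign hgR).
  have hoth : nonneg (- im z w (alpha i)) /\ nonneg (- im z w (alpha j)).
    move: IHb hng'; rewrite /g /c /w; case: (t) => [|t'] IHb' hng'.
      by exfalso; exact: (R_pn (R_alpha z i) (nonneg_alpha i) hng').
    have e : alt i j t'.+1 = alt i j t' ++ [:: if odd t' then j else i] by rewrite alt_rcons.
    move: IHb' hng'; rewrite e invl_rcons => IHb' hng'.
    have hl : nonneg (im z (alt i j t') (alpha (if odd t' then j else i))).
      by have [_ _ hl _] := IHb' _ (etrans (mem_cat _ _ _) (introT orP (or_intror (mem_head _ _)))).
    move: hng' hl; rewrite [odd t'.+1]/=; case: (odd t') => /= hng' hl.
      by split=> //; rewrite im_last opprK.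
    by split=> //; rewrite im_last opprK.
  have : {subset s <= invl z w}.
    move=> b /hs [hbR hbs hbn]; apply: inv_in => //.
    set d := mp z w b.
    have hdR : R (walk z w) d by apply: R_mp.
    case: (R_sign hdR) => // hdn; exfalso.
    have hds : inspan i j d by apply: mp_span.
    have eb : b = im z w (alpha i) *~ d i + im z w (alpha j) *~ d j.
      by rewrite -imMz -imMz -imD -span_expand // /d im_mp.
    apply: (R_pn hbR hbn); rewrite eb; apply: nonneg_opp_comb; by case: hoth.
  move/(uniq_leq_size su); rewrite size_invl size_alt => h.
  by move: (leq_trans ht h); rewrite ltnn.
have -> : alt i j t.+1 = w ++ [:: c] by rewrite alt_rcons.
rewrite invl_rcons; split.
  rewrite cat_uniq IHu /= andbT orbF; apply/negP => /IHb [_ _ _].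
  rewrite /g mp_im => h; exact: (R_pn (R_alpha _ c) (nonneg_alpha c) h).
move=> b; rewrite mem_cat => /orP[/IHb [h1 h2 h3 h4]|].
  by split=> //; apply: N_step.
rewrite inE => /eqP ->; split=> //.
  by apply: im_span => //; case/orP: cij => /eqP ->;
   [apply: alpha_span_i|apply: alpha_span_j].
by rewrite mp_rcons /g mp_im sg_alpha opprK; apply: nonneg_alpha.
Qed.


Lemma G_first z i j s t : i != j -> Pex z i j s -> (0 < t)%N -> (t <= size s)%N ->
  nonneg (- mp z (alt i j t) (alpha i)).
Proof.
move=> ij hP; case: t => [//|t] _ ht.
have [_ h] := growth ij hP ht.
by have [] := h (alpha i) (mem_head _ _).
Qed.

Lemma G_all z i j s : i != j -> Pex z i j s -> forall b, b \in s ->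
  nonneg (- mp z (alt i j (size s)) b).
Proof.
move=> ij hP b hb; have [hu h] := growth ij hP (leqnn (size s)).
have hsub : {subset invl z (alt i j (size s)) <= s}.
  by move=> v /h [h1 h2 h3 _]; apply/hP.2.
have hsz : (size s <= size (invl z (alt i j (size s))))%N by rewrite size_invl size_alt.
have [_ e] := uniq_min_size hu hsub hsz.
by have [] := h b; rewrite ?e.
Qed.

Lemma sg_inj x c : injective (sg x c).
Proof. by move=> u v e; rewrite -(sgK x c u) e sgK. Qed.

Lemma Pex_rho_le z i j c s s' : i != j -> (c == i) || (c == j) ->
  Pex z i j s -> Pex (rho c z) i j s' -> (size s <= size s')%N.
Proof.
move=> ij hc [hu hs] [hu' hs'].
have hcs : inspan i j (alpha c) by case/orP: hc => /eqP ->; [apply: alpha_span_i|apply: alpha_span_j].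
have ins : alpha c \in s by apply/hs; split; [apply: R_alpha | | apply: nonneg_alpha].
have ins' : alpha c \in s' by apply/hs'; split; [apply: R_alpha | | apply: nonneg_alpha].
have hu0 : uniq (map (sg z c) (rem (alpha c) s)) by rewrite map_inj_uniq ?rem_uniq //; apply: sg_inj.
have hsub : {subset map (sg z c) (rem (alpha c) s) <= rem (alpha c) s'}.
  move=> v /mapP [b]; rewrite (mem_rem_uniq _ hu) => /andP[hb /hs [h1 h2 h3]] ->.
  rewrite (mem_rem_uniq _ hu'); apply/andP; split.
    apply/eqP => e; apply: (R_pn h1 h3).
    by rewrite -(sgK z c b) e -{1}(rho2 z c) sg_alpha opprK; apply: nonneg_alpha.
  apply/hs'; split; first exact: R_sg.
    by move=> k ki kj; rewrite sg_out ?h2 //; case/orP: hc => /eqP ->.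
  exact: sigma_pos.
have := uniq_leq_size hu0 hsub; rewrite size_map !size_rem //.
have p' : (0 < size s')%N by case: (s') ins'.
move: (size s) (size s') p' => a b p' h; rewrite -!subn1 in h; lia.
Qed.

Lemma Pex_rho z i j c s s' : i != j -> (c == i) || (c == j) ->
  Pex z i j s -> Pex (rho c z) i j s' -> size s = size s'.
Proof.
move=> ij hc h h'; apply/eqP; rewrite eqn_leq (Pex_rho_le ij hc h h') /=.
apply: (Pex_rho_le ij hc h'); by rewrite rho2.
Qed.

Lemma Pex_exists z i j : exists s, Pex z i j s.
Proof.
have [s [hu hs]] := exact_list (Q := fun v => [/\ R z v, inspan i j v & nonneg v])
  (fun v h => let: And3 h1 _ _ := h in h1).
by exists s.
Qed.

Lemma Pex_walk z i j w s s' : i != j -> Iword i j w ->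
  Pex z i j s -> Pex (walk z w) i j s' -> size s = size s'.
Proof.
elim: w z s => [|c w IH] z s ij /= hw hP hP'.
  case: hP hP' => hu hs [hu' hs'].
  apply/eqP; rewrite eqn_leq; apply/andP; split; apply: uniq_leq_size => // v.
    by move/hs/hs'.
  by move/hs'/hs.
case/andP: hw => hc hw.
have [s1 hs1] := Pex_exists (rho c z) i j.
by rewrite (Pex_rho ij hc hP hs1); apply: (IH _ _ ij hw hs1 hP').
Qed.


Lemma sg_coord y c (u : vec) k : sg y c u k = u k - alpha c k * lf y c u.
Proof. by rewrite sgE fB fMz. Qed.

Lemma lf_span y c i j v : i != j -> inspan i j v -> lf y c v = C y c i * v i + C y c j * v j.
Proof.
move=> ij hv; rewrite {1}(span_expand ij hv) lfD !lfMz !lf_alpha; by [].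
Qed.

Definition det2 i j (f : vec -> vec) :=
  f (alpha i) i * f (alpha j) j - f (alpha i) j * f (alpha j) i.

Lemma det2_step y c i j u v : i != j -> (c == i) || (c == j) -> inspan i j u -> inspan i j v ->
  sg y c u i * sg y c v j - sg y c u j * sg y c v i = - (u i * v j - u j * v i).
Proof.
move=> ij hc hu hv; have ji : j != i by rewrite eq_sym.
rewrite !sg_coord !(lf_span y c ij) //.
case/orP: hc => /eqP ->; rewrite !alpha_i ?(alpha_ne ij) ?(alpha_ne ji) C_ii;
  move: (u i) (u j) (v i) (v j) (C y i j) (C y j i) => a1 b1 c1 d1 e1 f1; ring.
Qed.

Lemma det2_word z i j w : i != j -> Iword i j w -> det2 i j (mp z w) = (-1) ^+ size w.
Proof.
move=> ij; have ji : j != i by rewrite eq_sym.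
elim/last_ind: w => [|w c IH].
  by rewrite /det2 !mp_nil !alpha_i (alpha_ne ij) (alpha_ne ji) mulr0 subr0 mulr1 expr0.
rewrite -cats1 Iword_cat /= andbT => /andP[hw hc].
rewrite /det2 !mp_rcons det2_step //; try apply: mp_span => //;
  try first [apply: alpha_span_i | apply: alpha_span_j].
by rewrite -/(det2 i j (mp z w)) IH // size_cat addn1 exprS mulN1r.
Qed.

Lemma walk_alt2 z i j n : walk z (alt i j (2 * n)) = iter n (fun b => rho j (rho i b)) z.
Proof.
elim: n z => [//|n IH] z.
have -> : (2 * n.+1 = (2 * n).+2)%N by rewrite mulnS.
change (walk z (alt i j (2 * n).+2)) with (walk (rho j (rho i z)) (alt i j (2 * n))).
by rewrite IH iterSr.
Qed.

Lemma spos_pred (a b : I) (v : vec) : a != b ->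
  (exists p q : nat, v = alpha a *+ p + alpha b *+ q) <-> inspan a b v /\ nonneg v.
Proof.
move=> ab; split.
  case=> p [q ->]; split.
    move=> k ka kb; have ak : a != k by rewrite eq_sym.
    have bk : b != k by rewrite eq_sym.
    by rewrite fD !ffunMnE (alpha_ne ak) (alpha_ne bk) !mul0rn addr0.
  move=> k; rewrite fD !ffunMnE; apply: addr_ge0; apply: mulrn_wge0; exact: nonneg_alpha.
case=> hs hn; exists `|v a|%N, `|v b|%N.
rewrite {1}(span_expand ab hs); congr (_ + _).
  by rewrite -mulrz_nat natz gez0_abs.
by rewrite -mulrz_nat natz gez0_abs.
Qed.

Lemma R4_alt z i j s : i != j -> Pex z i j s -> walk z (alt i j (2 * size s)) = z.
Proof.
move=> ij [hu hs]; rewrite walk_alt2.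
have ji : j != i by rewrite eq_sym.
case: HR => _ _ _ H4; apply: (H4 z j i ji).
exists s; split=> // v; rewrite hs (spos_pred v ji); split.
  by case=> h1 h2 h3; split=> //; split=> //; apply: inspan_sym.
by case=> h1 [h2 h3]; split=> //; apply: inspan_sym.
Qed.

Lemma P1 z i j s : i != j -> Pex z i j s -> forall b, b \in s ->
  nonneg (mp z (alt i j (2 * size s)) b).
Proof.
move=> ij hP b hb; set m := size s.
have e : alt i j (2 * m) = alt i j m ++ (if odd m then alt j i m else alt i j m).
  by rewrite -alt_add addnn -mul2n.
set y := walk z (alt i j m).
have [sy hy] := Pex_exists y i j.
have hm : m = size sy by apply: (Pex_walk ij _ hP hy); case: (Iword_alt i j m).
have [hbR hbs hbn] := proj1 (hP.2 b) hb.
rewrite e mp_cat; set d := mp z (alt i j m) b.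
have hd : nonneg (- d) by apply: G_all.
have hdy : - d \in sy.
  apply/hy.2; split=> //; first by apply/R_opp/R_mp.
  have hw : Iword i j (alt i j m) by case: (Iword_alt i j m).
  have hds : inspan i j d by apply: mp_span.
  by move=> k ki kj; rewrite fN hds // oppr0.
case: (odd m).
  have ji : j != i by rewrite eq_sym.
  have := G_all ji (Pex_sym hy) hdy; rewrite -hm mpN opprK; by [].
have := G_all ij hy hdy; rewrite -hm mpN opprK; by [].
Qed.


Lemma vec_expand (v : vec) : v = \sum_k alpha k *~ v k.
Proof.
apply/ffunP => k; rewrite sum_ffunE (bigD1 k) //= fMz alpha_i mul1r big1 ?addr0 //.
by move=> l lk; rewrite fMz alpha_ne ?mul0r.
Qed.

Lemma mp_sum x w (F : I -> vec) : mp x w (\sum_k F k) = \sum_k mp x w (F k).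
Proof. exact: (big_morph _ (mpD x w) (mp0 x w)). Qed.

Lemma mp_id_basis x w : (forall k, mp x w (alpha k) = alpha k) -> forall v, mp x w v = v.
Proof.
move=> h v; rewrite [in LHS](vec_expand v) mp_sum {2}(vec_expand v).
by apply: eq_bigr => k _; rewrite mpMz h.
Qed.

Lemma comb_coord x w i j p q k :
  mp x w (alpha i *~ p + alpha j *~ q) k = mp x w (alpha i) k * p + mp x w (alpha j) k * q.
Proof. by rewrite mpD !mpMz fD !fMz. Qed.

Lemma rk2_id z i j s : i != j -> Pex z i j s -> forall v, mp z (alt i j (2 * size s)) v = v.
Proof.
move=> ij hP; have ji : j != i by rewrite eq_sym.
have hP' := Pex_sym hP.
have hw : walk z (alt i j (2 * size s)) = z by apply: R4_alt.
have hw' : walk z (alt j i (2 * size s)) = z by apply: (R4_alt ji hP').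
have n1 := P1 ij hP; have n2 := P1 ji hP'.
set m := size s in hw hw' n1 n2 *.
set W := alt i j (2 * m) in hw n1 *.
set W' := alt j i (2 * m) in hw' n2 *.
have rW : rev W = W' by rewrite /W rev_alt oddM.
have rW' : rev W' = W by rewrite /W' rev_alt oddM.
set f := mp z W. set g := mp z W'.
have inv1 : forall v, g (f v) = v.
  by move=> v; have := im_mp z W v; rewrite /im hw rW.
have IwW : Iword i j W by case: (Iword_alt i j (2 * m)).
have IwW' : Iword i j W' by case: (Iword_alt i j (2 * m)).
have ai : alpha i \in s.
  by apply/hP.2; split; [apply: R_alpha| apply: alpha_span_i| apply: nonneg_alpha].
have aj : alpha j \in s.
  by apply/hP.2; split; [apply: R_alpha| apply: alpha_span_j| apply: nonneg_alpha].
have si : inspan i j (f (alpha i)) by apply: mp_span => //; apply: alpha_span_i.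
have sj : inspan i j (f (alpha j)) by apply: mp_span => //; apply: alpha_span_j.
have exi := span_expand ij si; have exj := span_expand ij sj.
have E1 := congr1 (fun v : vec => v i) (inv1 (alpha i)).
have E2 := congr1 (fun v : vec => v j) (inv1 (alpha i)).
have E3 := congr1 (fun v : vec => v i) (inv1 (alpha j)).
have E4 := congr1 (fun v : vec => v j) (inv1 (alpha j)).
rewrite /= {1}exi /g comb_coord -/g in E1.
rewrite /= {1}exi /g comb_coord -/g in E2.
rewrite /= {1}exj /g comb_coord -/g in E3.
rewrite /= {1}exj /g comb_coord -/g in E4.
rewrite alpha_i in E1; rewrite (alpha_ne ij) in E2.
rewrite (alpha_ne ji) in E3; rewrite alpha_i in E4.
have Ed : det2 i j f = 1 by rewrite /f det2_word // /W size_alt exprM sqrrN expr1n.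
have [A1 B0 C0 D1] := mat2' (n1 _ ai i) (n1 _ ai j) (n1 _ aj i) (n1 _ aj j)
   (n2 _ ai i) (n2 _ ai j) (n2 _ aj i) (n2 _ aj j) E1 E2 E3 E4 Ed.
have fi : f (alpha i) = alpha i by rewrite exi A1 B0 mulr1z mulr0z addr0.
have fj : f (alpha j) = alpha j by rewrite exj C0 D1 mulr1z mulr0z add0r.
apply: mp_id_basis => k.
case: (eqVneq k i) => [->//|ki]; case: (eqVneq k j) => [->//|kj].
set v0 := f (alpha k) - alpha k.
have hv0 : inspan i j v0 by move=> l li lj; rewrite fB /f (mp_out _ _ IwW) // subrr.
have fv0 : f v0 = v0.
  by rewrite {1}(span_expand ij hv0) /f mpD !mpMz -/f fi fj -span_expand.
have fk : f (alpha k) = alpha k + v0 by rewrite /v0 addrC subrK.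
have pw : forall n, [/\ walk z (flatten (nseq n W)) = z,
     mp z (flatten (nseq n W)) v0 = v0 &
     mp z (flatten (nseq n W)) (alpha k) = alpha k + v0 *+ n].
  elim=> [|n [h1 h2 h3]]; first by split; rewrite ?mulr0n ?addr0.
  have -> : flatten (nseq n.+1 W) = W ++ flatten (nseq n W) by [].
  rewrite walk_cat hw h1 !mp_cat hw -/f fv0 h2 fk mpD h2 h3.
  by split=> //; rewrite mulrSr [RHS]addrA.
have hR : forall n, R z (alpha k + v0 *+ n).
  move=> n; case: (pw n) => h1 _ h3; rewrite -h3.
  by have := R_mp (flatten (nseq n W)) (R_alpha z k); rewrite h1.
suff : v0 = 0 by move/eqP; rewrite subr_eq0 => /eqP.
apply: NNPP => hnz.
have [l hl] : exists l, v0 l != 0.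
  apply: NNPP => hc; apply: hnz; apply/ffunP => l; rewrite f0.
  by apply: NNPP => h; apply: hc; exists l; apply/eqP.
case: (fin z) => L hL.
have hu : uniq (map (fun n => alpha k + v0 *+ n) (iota 0 (size L).+1)).
  rewrite map_inj_uniq ?iota_uniq // => n1' n2' /addrI /(congr1 (fun v : vec => v l)).
  by rewrite !ffunMnE; apply: mulrIn.
have hs : {subset map (fun n => alpha k + v0 *+ n) (iota 0 (size L).+1) <= L}.
  by move=> v /mapP [n _ ->]; apply/In_mem; apply: hL; apply: hR.
by have := uniq_leq_size hu hs; rewrite size_map size_iota ltnn.
Qed.

Lemma braid z i j s : i != j -> Pex z i j s -> eqw z (alt i j (size s)) (alt j i (size s)).
Proof.
move=> ij hP.
have hw := R4_alt ij hP; have hid := rk2_id ij hP.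
set m := size s in hw hid *.
have e : alt i j (2 * m) = alt i j m ++ rev (alt j i m) by rewrite rev_alt -alt_add addnn -mul2n.
rewrite e in hw hid.
set W := alt i j m in hw hid *; set W' := alt j i m in hw hid *; set y := walk z W.
have h1 : walk y (rev W') = z by rewrite -hw walk_cat.
have h2 : walk z W' = y by have := walk_rev y (rev W'); rewrite revK h1.
have h3 : forall v, mp y (rev W') (mp z W v) = v by move=> v; rewrite -mp_cat hid.
split; first by rewrite h2.
by move=> v; have := mp_rev y (rev W') (mp z W v); rewrite h1 revK h3 => ->.
Qed.


Definition oth (i j a : I) := if a == i then j else i.

Lemma alt_reduce x i j q : i != j -> Iword i j q ->
  exists a r, [/\ (a == i) || (a == j), (r <= size q)%N & eqw x q (alt a (oth i j a) r)].
Proof.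
move=> ij; have ji : j != i by rewrite eq_sym.
elim: q x => [|c q IH] x /=.
  by move=> _; exists i, 0%N; split; rewrite ?eqxx.
case/andP => hc hq; have [a [r [ha hr he]]] := IH (rho c x) hq.
case: r hr he => [|r] hr he.
  exists c, 1%N; split=> //; apply: eqw_cons; exact: he.
case: (eqVneq a c) => [eac|nac].
  rewrite eac in he.
  exists (oth i j c), r; split.
  - by rewrite /oth; case: (c == i); rewrite eqxx ?orbT.
  - by apply: (leq_trans (ltnW hr)); exact: leqnSn.
  - apply: (eqw_trans (eqw_cons he)).
    have -> : oth i j (oth i j c) = c.
      by rewrite /oth; case/orP: hc => /eqP ->; rewrite ?eqxx ?(negbTE ji) ?eqxx.
    exact: eqw_cancel.
exists c, r.+2; split=> //.
have hao : a = oth i j c.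
  by move: nac; rewrite /oth; case/orP: hc => /eqP ->; case/orP: ha => /eqP ->;
     rewrite ?eqxx ?(negbTE ji) ?(negbTE ij) ?eqxx.
rewrite hao in he.
have eo : oth i j (oth i j c) = c.
  by rewrite /oth; case/orP: hc => /eqP ->; rewrite ?eqxx ?(negbTE ji) ?eqxx.
rewrite eo in he; exact: eqw_cons.
Qed.

Lemma rank2 x i j q : i != j -> Iword i j q ->
  (forall w', Iword i j w' -> eqw (rho i x) w' (i :: q) -> (size q <= size w')%N) ->
  inspan i j (mp x q (alpha i)) /\ nonneg (mp x q (alpha i)).
Proof.
move=> ij hq hyp; have ji : j != i by rewrite eq_sym.
split; first by apply: mp_span => //; apply: alpha_span_i.
have [a [r [ha hr he]]] := alt_reduce x ij hq.
rewrite he.2.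
case: r hr he => [|r] hr he; first by apply: nonneg_alpha.
case/orP: ha => /eqP ea; rewrite ea /oth ?eqxx ?(negbTE ji) in he *.
  exfalso.
  have h1 : eqw (rho i x) (alt j i r) (i :: q).
    have he' : eqw (rho i (rho i x)) q (alt i j r.+1) by rewrite rho2.
    apply: eqw_sym; apply: (eqw_trans (eqw_cons he')).
    exact: eqw_cancel.
  have := hyp _ (proj2 (Iword_alt i j r)) h1; rewrite size_alt => h2.
  by move: (leq_trans hr h2); rewrite ltnn.
set y := rho i x.
have [s hs] := Pex_exists y i j.
have hqe : eqw y (i :: q) (alt i j r.+2).
  by apply: eqw_cons; rewrite /y rho2.
case: (leqP r.+2 (size s)) => hrs.
  have := G_first ij hs (ltn0Sn _) hrs.
  change (alt i j r.+2) with (i :: alt j i r.+1).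
  by rewrite mp_cons sg_alpha /y rho2 mpN opprK.
exfalso.
have [sx hsx] := Pex_exists x i j.
have hci : (i == i) || (i == j) by rewrite eqxx.
have ems : size sx = size s by exact: (Pex_rho ij hci hsx hs).
set m := size s in hrs ems.
have m0 : (0 < m)%N.
  have : alpha i \in sx.
    by apply/hsx.2; split; [apply: R_alpha| apply: alpha_span_i| apply: nonneg_alpha].
  by rewrite -ems; case: (sx).
have hbr := braid ji (Pex_sym hsx); rewrite ems -/m in hbr.
have er : alt j i r.+1 = alt j i m ++ (if odd m then alt i j (r.+1 - m) else alt j i (r.+1 - m)).
  by rewrite -alt_add subnKC //; apply: ltnW.
set rest := (if odd m then _ else _) in er.
have hrest : Iword i j rest.
  by rewrite /rest; case: (odd m); case: (Iword_alt i j (r.+1 - m)).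
have [m' em] : exists m', m = m'.+1 by exists m.-1; rewrite prednK.
have w'def : eqw y (i :: q) (alt j i m' ++ rest).
  apply: (eqw_trans hqe).
  change (alt i j r.+2) with (i :: alt j i r.+1).
  rewrite er.
  apply: (eqw_trans (w2 := i :: alt i j m ++ rest)).
    by apply: eqw_cons; rewrite /y rho2; apply: eqw_catr.
  rewrite em.
  change (i :: alt i j m'.+1 ++ rest) with (i :: i :: (alt j i m' ++ rest)).
  exact: eqw_cancel.
have hI : Iword i j (alt j i m' ++ rest) by rewrite Iword_cat hrest andbT; case: (Iword_alt i j m').
have := hyp _ hI (eqw_sym w'def).
rewrite size_cat size_alt.
have -> : size rest = (r.+1 - m)%N by rewrite /rest; case: (odd _); rewrite size_alt.
move: hr hrs em; rewrite /m => hr hrs em h; lia.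
Qed.


Lemma Tmain n : forall x p i, size p = n ->
  (forall w', eqw x w' p -> (n <= size w')%N) ->
  (forall w', eqw (rho i x) w' (i :: p) -> (n <= size w')%N) ->
  nonneg (mp x p (alpha i)).
Proof.
elim/ltn_ind: n => n IH x p i hs hred hsi.
case: p hs hred hsi => [|j p'] hs hred hsi; first by apply: nonneg_alpha.
have ij : i != j.
  apply/eqP => eij; rewrite -eij in hs hred hsi.
  have := hsi p' (eqw_sym (eqw_cancel _ _ _)).
  by rewrite -hs /= ltnn.
pose Q k := exists q pp, [/\ Iword i j q, eqw x (q ++ pp) (j :: p'),
    (size pp + size q <= n)%N & size pp = k].
pose P := fun k => bP (Q k).
have exQ : exists k, P k.
  exists (size p'); apply/bPE; exists [:: j], p'; split=> //.
    by rewrite /Iword /= eqxx orbT.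
  by rewrite -hs /= addn1.
case: (ex_minnP exQ) => k0 /bPE [q [pp [hq hqp hsz hk]]] hmin.
have hmin' : forall q' pp', Iword i j q' -> eqw x (q' ++ pp') (j :: p') ->
    (size pp' + size q' <= n)%N -> (k0 <= size pp')%N.
  by move=> q' pp' a b c; apply: hmin; apply/bPE; exists q', pp'.
set z := walk x q.
have k0lt : (k0 < n)%N.
  have := hmin' [:: j] p'; rewrite /Iword /= eqxx orbT -hs /= addn1 => /(_ isT).
  by move=> /(_ (eqw_refl _ _) (leqnn _)).
have F0 : forall w', eqw z w' pp -> (k0 <= size w')%N.
  move=> w' e; case: (leqP k0 (size w')) => // hlt; exfalso.
  have h1 : (size w' + size q <= n)%N by lia.
  have := hmin' q w' hq (eqw_trans (eqw_catl e) hqp) h1; lia.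
have F1 : forall c, (c == i) || (c == j) ->
    forall w', eqw (rho c z) w' (c :: pp) -> (k0 <= size w')%N.
  move=> c hc w' e; case: (leqP k0 (size w')) => // hlt; exfalso.
  have hI : Iword i j (q ++ [:: c]) by rewrite Iword_cat hq /= hc.
  have he : eqw x ((q ++ [:: c]) ++ w') (j :: p').
    rewrite -catA cat1s; apply: (eqw_trans _ hqp); apply: eqw_catl.
    exact: (eqw_trans (eqw_cons e) (eqw_cancel _ _ _)).
  have h1 : (size w' + size (q ++ [:: c]) <= n)%N by rewrite size_cat /=; lia.
  have := hmin' _ _ hI he h1; lia.
have ci : (i == i) || (i == j) by rewrite eqxx.
have cj : (j == i) || (j == j) by rewrite eqxx orbT.
have hi := IH k0 k0lt z pp i hk F0 (F1 i ci).
have hj := IH k0 k0lt z pp j hk F0 (F1 j cj).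
have F2 : forall w', Iword i j w' -> eqw (rho i x) w' (i :: q) -> (size q <= size w')%N.
  move=> w' hw' e.
  have e2 : eqw (rho i x) (w' ++ pp) (i :: j :: p').
    apply: (eqw_trans (eqw_catr pp e)); rewrite cat_cons; apply: eqw_cons.
    by rewrite rho2.
  have := hsi _ e2; rewrite size_cat; lia.
have [hsp hnn] := rank2 ij hq F2.
rewrite -(hqp.2 (alpha i)) mp_cat -/z (span_expand ij hsp) mpD !mpMz.
by apply: nonneg_comb => //; apply: hnn.
Qed.

Lemma key x w : (forall v, mp x w v = v) -> walk x w = x.
Proof.
move=> hid.
pose P := fun k => bP (exists w0, size w0 = k /\ eqw x w0 w).
have exP : exists k, P k by exists (size w); apply/bPE; exists w.
case: (ex_minnP exP) => k0 /bPE [w0 [hs he]] hmin.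
have hmin' : forall w', eqw x w' w -> (k0 <= size w')%N.
  by move=> w' e; apply: hmin; apply/bPE; exists w'.
case: w0 hs he => [|i w1] hs he; first by rewrite -he.1.
exfalso.
have H1 : forall w', eqw (rho i x) w' w1 -> (size w1 <= size w')%N.
  move=> w' e; have := hmin' (i :: w') (eqw_trans (eqw_cons e) he).
  by rewrite -hs.
have H2 : forall w', eqw (rho i (rho i x)) w' (i :: w1) -> (size w1 <= size w')%N.
  rewrite rho2 => w' e; have := hmin' w' (eqw_trans e he).
  by rewrite -hs => /ltnW.
have h := @Tmain (size w1) (rho i x) w1 i (erefl _) H1 H2.
have e : mp (rho i x) w1 (alpha i) = - alpha i.
  by have := he.2 (- alpha i); rewrite hid mp_cons sgN sg_alpha opprK.
by move: (h i); rewrite e fN alpha_i.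
Qed.


Lemma count_le_in (T : eqType) (p q : pred T) (s : seq T) :
  (forall y, y \in s -> p y -> q y) -> (count p s <= count q s)%N.
Proof.
elim: s => [//|y s IH] h /=.
have h1 : (count p s <= count q s)%N by apply: IH => z hz; apply: h; rewrite inE hz orbT.
have h2 : (p y <= q y)%N.
  by case: (boolP (p y)) => // py; rewrite (h y (mem_head _ _) py).
exact: leq_add h2 h1.
Qed.

Lemma count_lt_in (T : eqType) (p q : pred T) (s : seq T) x :
  (forall y, y \in s -> p y -> q y) -> x \in s -> q x -> ~~ p x ->
  (count p s < count q s)%N.
Proof.
elim: s => [//|y s IH] h /=; rewrite inE => /orP[/eqP ->|hx] qx px.
  have := count_le_in (fun z hz => h z (mem_behead hz)).
  by rewrite (negbTE px) qx add0n add1n ltnS.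
have h1 : (count p s < count q s)%N.
  by apply: IH => // z hz; apply: h; rewrite inE hz orbT.
have h2 : (p y <= q y)%N.
  by case: (boolP (p y)) => // py; rewrite (h y (mem_head _ _) py).
by rewrite -addnS; apply: leq_add.
Qed.

Lemma nonneg_sum (F : I -> vec) : (forall k, nonneg (F k)) -> nonneg (\sum_k F k).
Proof. by move=> h l; rewrite sum_ffunE; apply: sumr_ge0 => k _; apply: h. Qed.

Lemma Rre_R a v : Rre rho C a v -> R a v.
Proof.
case=> b [w [i [h1 ->]]]; rewrite -h1 wmap1.
exact: (R_mp w (R_alpha b i)).
Qed.

Lemma R_spread a w : finite_pred (R a) -> finite_pred (R (walk a w)).
Proof.
case=> l hl; exists (List.map (mp a w) l) => v hv.
rewrite -(mp_im a w v); apply: List.in_map; apply: hl; exact: R_im.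
Qed.

Lemma fin_from_re a : (forall b, finite_pred (Rre rho C b)) -> finite_pred (R a).
Proof.
move=> fre; case: (fre a) => l hl.
set L := undup (filter (fun v => bP (Rre rho C a v /\ nonneg v)) l).
have hL : forall v, v \in L <-> Rre rho C a v /\ nonneg v.
  move=> v; rewrite mem_undup mem_filter; split; first by case/andP => /bPE.
  move=> h; apply/andP; split; first exact/bPE.
  by apply/In_mem; apply: hl; case: h.
pose cnt w := count (fun b => bP (nonneg (- mp a w b))) L.
pose P := fun k => bP (exists w, cnt w = k).
have exP : exists k, P k by exists (cnt [::]); apply/bPE; exists [::].
have ubP : forall k, P k -> (k <= size L)%N.
  by move=> k /bPE [w <-]; apply: count_size.
case: (ex_maxnP exP ubP) => kmax /bPE [w hw] hmax.
have hneg : forall i, nonneg (- im a w (alpha i)).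
  move=> i; apply: NNPP => hn.
  have hR : R a (im a w (alpha i)) by apply: R_im; apply: R_alpha.
  have hp : nonneg (im a w (alpha i)) by case: (R_sign hR).
  have hb : im a w (alpha i) \in L.
    apply/hL; split=> //.
    exists (walk a w), (rev w), i; split; first by rewrite wmap1 walk_rev.
    by [].
  have : (cnt w < cnt (w ++ [:: i]))%N.
    apply: (count_lt_in _ hb).
    - move=> y /hL [hy1 hy2] /bPE hy3; apply/bPE.
      by apply: N_step => //; apply: Rre_R.
    - apply/bPE; rewrite mp_rcons mp_im sg_alpha opprK; exact: nonneg_alpha.
    - apply/negP => /bPE; rewrite mp_im => h.
      exact: (R_pn (R_alpha (walk a w) i) (nonneg_alpha i) h).
  have := hmax _ (proj2 (bPE _) (ex_intro _ (w ++ [:: i]) erefl)).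
  rewrite -/(cnt w) hw; lia.
have hall : forall g, R a g -> nonneg g -> g \in invl a w.
  move=> g hg hgn; apply: inv_in => //.
  set d := mp a w g.
  have hd : R (walk a w) d by apply: R_mp.
  case: (R_sign hd) => // hdn; exfalso.
  apply: (R_pn hg hgn).
  have -> : g = im a w d by rewrite im_mp.
  rewrite (vec_expand d) /im mp_sum -sumrN; apply: nonneg_sum => k.
  rewrite mpMz -mulNrz => c; rewrite fMz; apply: mulr_ge0; first exact: hneg.
  exact: hdn.
exists (invl a w ++ map -%R (invl a w)) => v hv; apply/In_mem.
rewrite mem_cat; case: (R_sign hv) => hs.
  by rewrite hall.
apply/orP; right; rewrite -(opprK v); apply: map_f; apply: hall => //.
exact: R_opp.
Qed.

Lemma re_from_weyl : finite_pred (weyl_mor rho C) -> forall a, finite_pred (Rre rho C a).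
Proof.
case=> s hs a.
exists (List.flat_map (fun t => List.map (fun i => t.1.2 (alpha i)) (enum I)) s).
move=> v [b [w [i [h1 ->]]]].
apply/List.in_flat_map; exists ((a, (wmap rho C b w).2), b); split.
  apply: hs; exists w => /=; rewrite -h1; by case: (wmap rho C b w).
apply: (List.in_map (fun i => (wmap rho C b w).2 (alpha i))).
by apply/In_mem; rewrite mem_enum.
Qed.

Lemma mp_eq_basis x w y w' : (forall k, mp x w (alpha k) = mp y w' (alpha k)) ->
  forall v, mp x w v = mp y w' v.
Proof.
move=> h v; rewrite (vec_expand v) !mp_sum; apply: eq_bigr => k _.
by rewrite !mpMz h.
Qed.


Lemma fin_by_codes (X : Type) (x0 : X) (D : X -> Prop) (L : seq vec) (code : X -> I -> vec) :
  (forall x, D x -> forall k, code x k \in L) ->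
  (forall x y, D x -> D y -> (forall k, code x k = code y k) -> x = y) ->
  exists s : seq X, forall x, D x -> List.In x s.
Proof.
move=> hc hinj.
pose ch (t : {ffun I -> 'I_(size L)}) :=
  epsilon (inhabits x0) (fun x => D x /\ forall k, code x k = nth 0 L (t k)).
exists (List.map ch (enum {ffun I -> 'I_(size L)})) => x hx.
have hlt : forall k, (index (code x k) L < size L)%N by move=> k; rewrite index_mem hc.
pose t := [ffun k => Ordinal (hlt k)].
have ht : forall k, code x k = nth 0 L (t k) by move=> k; rewrite ffunE /= nth_index ?hc.
have [hy1 hy2] : D (ch t) /\ forall k, code (ch t) k = nth 0 L (t k).
  by apply: (epsilon_spec (inhabits x0) (fun y => D y /\ forall k, code y k = nth 0 L (t k))); exists x.
have -> : x = ch t by apply: hinj => // k; rewrite ht hy2.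
apply/List.in_map_iff; exists t; split=> //; apply/In_mem; by rewrite mem_enum.
Qed.

Lemma fin_union (X Y : Type) (objs : seq Y) (D : Y -> Y -> X -> Prop) :
  (forall a b, exists s, forall t, D a b t -> List.In t s) ->
  exists s, forall a b t, List.In a objs -> List.In b objs -> D a b t -> List.In t s.
Proof.
move=> H.
pose S a b := proj1_sig (constructive_indefinite_description _ (H a b)).
exists (List.flat_map (fun a => List.flat_map (fun b => S a b) objs) objs) => a b t ha hb hd.
apply/List.in_flat_map; exists a; split=> //; apply/List.in_flat_map; exists b; split=> //.
by rewrite /S; case: constructive_indefinite_description => s hs /=; apply: hs.
Qed.

Hypothesis conn : connected rho.
Variable a0 : A.

Lemma objs_fin : exists objs : seq A, forall x, List.In x objs.
Proof.
pose u x := epsilon (inhabits [::]) (fun w => walk x w = a0).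
have hu : forall x, walk x (u x) = a0.
  by move=> x; apply: (epsilon_spec (inhabits [::]) (fun w => walk x w = a0)); apply: conn.
case: (fin a0) => L0 hL0.
pose code x k := mp x (u x) (alpha k).
have hc : forall x, True -> forall k, code x k \in L0.
  move=> x _ k; apply/In_mem; apply: hL0; rewrite -(hu x); apply: R_mp; apply: R_alpha.
have hinj : forall x y, True -> True -> (forall k, code x k = code y k) -> x = y.
  move=> x y _ _ hk.
  have hy : forall v, mp a0 (rev (u y)) (mp y (u y) v) = v.
    by move=> v; have := mp_rev y (u y) v; rewrite hu.
  have hid : forall v, mp x (u x ++ rev (u y)) v = v.
    apply: mp_id_basis => k; rewrite mp_cat hu.
    by have := hk k; rewrite /code => ->; rewrite hy.
  have := key hid; rewrite walk_cat hu.
  have := walk_rev y (u y); rewrite hu => -> ->; by [].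
have [s hs] := @fin_by_codes A a0 (fun _ => True) L0 code hc hinj.
by exists s => x; apply: hs.
Qed.

Lemma weyl_fin : finite_pred (weyl_mor rho C).
Proof.
have [objs hobjs] := objs_fin.
pose L b := proj1_sig (constructive_indefinite_description _ (fin b)).
have hL : forall b v, R b v -> List.In v (L b).
  by move=> b; rewrite /L; case: constructive_indefinite_description.
pose D a b (t : A * (vec -> vec) * A) := weyl_mor rho C t /\ t.2 = a /\ t.1.1 = b.
have H : forall a b, exists s, forall t, D a b t -> List.In t s.
  move=> a b.
  apply: (@fin_by_codes _ ((b, id), a) (D a b) (L b) (fun t k => t.1.2 (alpha k))).
  - move=> [[b' f] a'] [[w hw] [/= ea eb]] k; apply/In_mem; apply: hL.
    have e1 : b' = walk a' w by rewrite -wmap1 hw.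
    have e2 : f = mp a' w by rewrite /mp hw.
    rewrite -eb e1 e2; apply: R_mp; apply: R_alpha.
  - move=> [[b1 f1] a1] [[b2 f2] a2] [[w1 hw1] [/= e1 e2]] [[w2 hw2] [/= e3 e4]] hk /=.
    have ef1 : f1 = mp a1 w1 by rewrite /mp hw1.
    have ef2 : f2 = mp a2 w2 by rewrite /mp hw2.
    have -> : f1 = f2.
      apply: functional_extensionality => v; rewrite ef1 ef2.
      by apply: mp_eq_basis => k; rewrite -ef1 -ef2; apply: hk.
    by rewrite e1 e2 e3 e4.
have [s hs] := fin_union objs H.
exists s => -[[b f] a] ht; apply: (hs a b) => //; split=> //.
Qed.

End Basics.

Local Close Scope ring_scope.

Theorem lemma2p11 (I : finType) (HI : 0 < #|I|) (A : Type) (a0 : A)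
  (rho : I -> A -> A) (C : A -> I -> I -> int) (R : A -> vec I -> Prop) :
  cartan_scheme rho C -> connected rho -> root_system rho C R ->
  [<-> forall a, finite_pred (R a);
       exists a, finite_pred (R a);
       forall a, finite_pred (Rre rho C a);
       finite_pred (weyl_mor rho C)].
Proof.
move=> HC hconn HR.
have /card_gt0P [i0 _] := HI.
have E01 : (exists a, finite_pred (R a)) -> forall a, finite_pred (R a).
  by case=> a ha b; have [w <-] := hconn a b; exact: (R_spread HC HR w ha).
have E02 : (forall a, finite_pred (R a)) -> forall a, finite_pred (Rre rho C a).
  move=> h a; case: (h a) => l hl; exists l => v hv; apply: hl; exact: (Rre_R HR hv).
apply: AllIffConj => [h|]; first by exists a0; apply: h.
apply: AllIffConj => [h|]; first exact: E02 (E01 h).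
apply: AllIffConj => [h|h].
  exact: (weyl_fin HC HR i0 (fun a => fin_from_re HC HR i0 a h) hconn a0).
move=> a; apply: (fin_from_re HC HR i0 a); exact: re_from_weyl h.
Qed.
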